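(* Let $n\ge1$ and $\vec p,\vec q\in[0,1]^n$ satisfy $p_i\ge q_i$ for all $i\in\{1,\dots,n\}$. Let $S_{\vec p}$ be a sum of $n$ independent random variables $X_i\sim\mathrm{Ber}(p_i)$, and similarly $S_{\vec q}$. Define $\Delta=\sum_{i=1}^n|p_i-q_i|$, $\sigma_{\vec p}^2=\sum_{i=1}^n p_i(1-p_i)$ and $\Phi(\vec p,\vec q)=\min\big(1,\Delta/\sqrt{\sigma_{\vec p}^2+1}\big)$. Then $$\mathrm{TV}(S_{\vec p},S_{\vec q})\ge\frac1{12}\,\Phi(\vec p,\vec q).$$
   Context: $\mathrm{TV}$ is the total variation distance, $\mathrm{TV}(P,Q)=\frac12\sum_\omega|P(\omega)-Q(\omega)|$, applied to the laws of the random variables. *)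

(* Defs.v *)
From HB Require Import structures.
From mathcomp Require Import all_boot all_order all_algebra.
From mathcomp Require Import reals.
Set Implicit Arguments. Unset Strict Implicit. Unset Printing Implicit Defensive.
Import Order.TTheory GRing.Theory Num.Theory.
Local Open Scope ring_scope.

Definition bern_weight (R : realType) (n : nat) (p : 'I_n -> R)
  (x : {ffun 'I_n -> bool}) : R :=
  \prod_(i < n) (if x i then p i else 1 - p i).

Definition pb_pmf (R : realType) (n : nat) (p : 'I_n -> R) (k : nat) : R :=
  \sum_(x : {ffun 'I_n -> bool} | (\sum_(i < n) (x i : nat))%N == k) bern_weight p x.

(* Total variation distance between the laws of S_p and S_q
   (both supported on {0,...,n}). *)
Definition TV_pb (R : realType) (n : nat) (p q : 'I_n -> R) : R :=
  2^-1 * \sum_(k < n.+1) `|pb_pmf p k - pb_pmf q k|.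

Definition Delta (R : realType) (n : nat) (p q : 'I_n -> R) : R :=
  \sum_(i < n) `|p i - q i|.

Definition sigma2 (R : realType) (n : nat) (p : 'I_n -> R) : R :=
  \sum_(i < n) p i * (1 - p i).

Definition Phi (R : realType) (n : nat) (p q : 'I_n -> R) : R :=
  Num.min 1 (Delta p q / Num.sqrt (sigma2 p + 1)).

(* Main.v *)
Require Import Defs.
From HB Require Import structures.
From mathcomp Require Import all_boot all_order all_algebra.
From mathcomp Require Import reals ring lra.
Import Order.TTheory GRing.Theory Num.Theory.
Set Implicit Arguments. Unset Strict Implicit. Unset Printing Implicit Defensive.
Local Open Scope ring_scope.

Definition Ys n (x : {ffun 'I_n -> bool}) : nat := (\sum_(i < n) (x i : nat))%N.
Definition hE (R : realType) n (g : nat -> R) (a : 'I_n -> R) : R :=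
  \sum_(x : {ffun 'I_n -> bool}) bern_weight a x * g (Ys x).
Definition setv (R : realType) n (a : 'I_n -> R) (j : 'I_n) (v : R) : 'I_n -> R :=
  fun i => if i == j then v else a i.

Lemma hE_exta (R : realType) n (g : nat -> R) (a a' : 'I_n -> R) :
  (forall i, a i = a' i) -> hE g a = hE g a'.
Proof. move=> H; apply: eq_bigr => x _; congr (_ * _); apply: eq_bigr => i _; by rewrite H. Qed.

Lemma hE_extg (R : realType) n (g g' : nat -> R) (a : 'I_n -> R) :
  (forall k, g k = g' k) -> hE g a = hE g' a.
Proof. move=> H; apply: eq_bigr => x _; by rewrite H. Qed.

Lemma bw_D1 (R : realType) n (a : 'I_n -> R) x j : bern_weight a x =
  (if x j then a j else 1 - a j) * \prod_(i < n | i != j) (if x i then a i else 1 - a i).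
Proof. by rewrite /bern_weight (bigD1 j). Qed.

Lemma hE_aff (R : realType) n (g : nat -> R) (a : 'I_n -> R) j :
  hE g a = a j * hE g (setv a j 1) + (1 - a j) * hE g (setv a j 0).
Proof.
rewrite /hE !mulr_sumr -big_split /=; apply: eq_bigr => x _.
rewrite !(bw_D1 _ _ j) /setv eqxx.
have E v : \prod_(i < n | i != j) (if x i then (if i == j then v else a i)
     else 1 - (if i == j then v else a i)) =
     \prod_(i < n | i != j) (if x i then a i else 1 - a i).
  by apply: eq_bigr => i /negbTE ->.
rewrite !E; case: (x j); ring.
Qed.

Definition flipf n (j : 'I_n) (x : {ffun 'I_n -> bool}) : {ffun 'I_n -> bool} :=
  [ffun i => if i == j then ~~ x i else x i].
Lemma flipfK n j : involutive (@flipf n j).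
Proof. move=> x; apply/ffunP => i; rewrite !ffunE; case: (i == j) => //; by rewrite negbK. Qed.

Lemma hE_flip (R : realType) n (g : nat -> R) (z : 'I_n -> R) j : z j = 0 ->
  hE g (setv z j 1) = hE (fun k => g k.+1) z.
Proof.
move=> zj0; rewrite /hE (reindex_inj (inv_inj (@flipfK n j))) /=.
apply: eq_bigr => x _.
rewrite !(bw_D1 _ _ j) /setv eqxx ffunE eqxx.
have E: \prod_(i < n | i != j) (if flipf j x i then (if i == j then 1 else z i)
   else 1 - (if i == j then 1 else z i)) = \prod_(i < n | i != j) (if x i then z i else 1 - z i).
  by apply: eq_bigr => i ni; rewrite ffunE (negbTE ni).
rewrite E zj0; case xj: (x j) => /=; first by rewrite subrr !mul0r.
congr (_ * g _); first by rewrite subr0.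
rewrite /Ys (bigD1 j) //= [in RHS](bigD1 j) //= ffunE eqxx xj /=.
congr (_.+1); apply: eq_bigr => i ni; by rewrite ffunE (negbTE ni).
Qed.

Lemma hE_diff (R : realType) n (g : nat -> R) (z : 'I_n -> R) j : z j = 0 ->
  hE g (setv z j 1) - hE g z = hE (fun k => g k.+1 - g k) z.
Proof. move=> zj; rewrite hE_flip // /hE -sumrB; apply: eq_bigr => x _; by rewrite mulrBr. Qed.

Definition zz (R : realType) n (a b : 'I_n -> R) (j : 'I_n) : 'I_n -> R :=
  fun i => if (i < j)%N then a i else if i == j then 0 else b i.

Lemma TEL (R : realType) n (g : nat -> R) (a b : 'I_n -> R) :
  hE g a - hE g b = \sum_(j < n) (a j - b j) * hE (fun k => g k.+1 - g k) (zz a b j).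
Proof.
pose hyb (m : nat) : 'I_n -> R := fun i => if (i < m)%N then a i else b i.
have -> : hE g a = hE g (hyb n) by apply: hE_exta => i; rewrite /hyb ltn_ord.
have -> : hE g b = hE g (hyb 0%N) by apply: hE_exta => i; rewrite /hyb ltn0.
rewrite -(telescope_sumr (fun m => hE g (hyb m)) (leq0n n)) big_mkord; apply: eq_bigr => j _.
rewrite (hE_aff g (hyb j.+1) j) (hE_aff g (hyb j) j) /hyb ltnSn ltnn.
have E1 v : hE g (setv (fun i => if (i < j.+1)%N then a i else b i) j v)
   = hE g (setv (zz a b j) j v).
  apply: hE_exta => i; rewrite /setv /zz; case: eqP => // /eqP nij.
  rewrite ltnS leq_eqVlt.
  have -> : (nat_of_ord i == nat_of_ord j) = false by apply/negbTE.
  by [].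
have E0 v : hE g (setv (fun i => if (i < j)%N then a i else b i) j v)
   = hE g (setv (zz a b j) j v).
  apply: hE_exta => i; rewrite /setv /zz; case: (i == j) => //.
rewrite !E1 !E0.
have Z : hE g (setv (zz a b j) j 0) = hE g (zz a b j).
  by apply: hE_exta => i; rewrite /setv /zz; case: eqP => // ->; by rewrite ltnn.
rewrite Z -(@hE_diff _ _ g (zz a b j) j); last by rewrite /zz ltnn eqxx.
ring.
Qed.

Lemma hE_base (R : realType) n (g : nat -> R) : hE g (fun _ : 'I_n => 0) = g 0%N.
Proof.
pose x0 : {ffun 'I_n -> bool} := [ffun => false].
rewrite /hE (bigD1 x0) //= big1 ?addr0.
- have -> : Ys x0 = 0%N by rewrite /Ys big1 // => i _; rewrite ffunE.
  rewrite /bern_weight big1 ?mul1r // => i _; by rewrite ffunE subr0.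
- move=> x nx.
  case: (boolP [exists i, x i]) => [/existsP [i xi]|/existsPn H].
    by rewrite /bern_weight (bigD1 i) //= xi !mul0r.
  exfalso; apply: (negP nx); apply/eqP/ffunP => i.
  rewrite ffunE; exact/negbTE/H.
Qed.

Lemma hE0 (R : realType) n (g : nat -> R) (a : 'I_n -> R) :
  (forall k, g k = 0) -> hE g a = 0.
Proof. move=> H; rewrite /hE big1 // => x _; by rewrite H mulr0. Qed.

Lemma hE_M0 (R : realType) n (a : 'I_n -> R) : hE (fun _ => 1) a = 1.
Proof.
have := TEL (fun _ => 1) a (fun _ => 0); rewrite hE_base big1.
  by move/eqP; rewrite subr_eq0 => /eqP.
by move=> j _; rewrite hE0 ?mulr0 // => k; rewrite subrr.
Qed.

Lemma bw_sum1 (R : realType) n (a : 'I_n -> R) : \sum_x bern_weight a x = 1.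
Proof. rewrite -(hE_M0 a) /hE; apply: eq_bigr => x _; by rewrite mulr1. Qed.

Lemma hE_lin (R : realType) n (al be : R) (g : nat -> R) (a : 'I_n -> R) :
  hE (fun k => al + be * g k) a = al + be * hE g a.
Proof.
rewrite /hE; under eq_bigr do rewrite mulrDr.
rewrite big_split /= -mulr_suml bw_sum1 mul1r mulr_sumr; congr (_ + _).
by apply: eq_bigr => x _; rewrite mulrCA.
Qed.

Lemma natrS' (R : realType) k : (k.+1)%:R = k%:R + 1 :> R.
Proof. by rewrite -addn1 natrD. Qed.

Lemma hE_M1 (R : realType) n (a : 'I_n -> R) : hE (fun k => k%:R) a = \sum_i a i.
Proof.
have := TEL (fun k => k%:R) a (fun _ => 0); rewrite hE_base subr0 => ->.
apply: eq_bigr => j _; rewrite subr0 (hE_extg _ (g' := fun _ => 1)) ?hE_M0 ?mulr1 //.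
by move=> k; rewrite natrS' addrAC subrr add0r.
Qed.

Definition Tn (R : realType) n (a : 'I_n -> R) (m : nat) : R :=
  \sum_(i < n) (if (i < m)%N then a i else 0).

Lemma Tn_S (R : realType) n (a : 'I_n -> R) (j : 'I_n) : Tn a j.+1 = Tn a j + a j.
Proof.
rewrite /Tn (bigD1 j) //= [in RHS](bigD1 j) //= ltnSn ltnn add0r addrC; congr (_ + _).
apply: eq_bigr => i nij; rewrite ltnS leq_eqVlt.
have -> : (nat_of_ord i == nat_of_ord j) = false by apply/negbTE.
by [].
Qed.

Lemma triangle (R : realType) n (a : 'I_n -> R) :
  (\sum_i a i) ^+ 2 = \sum_(j < n) a j * (2 * Tn a j + a j).
Proof.
have -> : \sum_i a i = Tn a n by apply: eq_bigr => i _; rewrite ltn_ord.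
have -> : (Tn a n)^+2 = (Tn a n)^+2 - (Tn a 0)^+2.
  have T0 : Tn a 0 = 0 by rewrite /Tn big1 // => i _; rewrite ltn0.
  rewrite T0; ring.
rewrite -(telescope_sumr (fun m => (Tn a m)^+2) (leq0n n)) big_mkord.
apply: eq_bigr => j _; rewrite Tn_S; ring.
Qed.

Lemma hE_M2 (R : realType) n (a : 'I_n -> R) (c : R) :
  hE (fun k => (k%:R - c) ^+ 2) a = \sum_i a i * (1 - a i) + (\sum_i a i - c) ^+ 2.
Proof.
have := TEL (fun k => (k%:R - c) ^+ 2) a (fun _ => 0); rewrite hE_base => /eqP.
rewrite subr_eq => /eqP ->.
have E j : hE (fun k => (k.+1%:R - c) ^+ 2 - (k%:R - c) ^+ 2) (zz a (fun _ => 0) j)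
    = (1 - 2 * c) + 2 * Tn a j.
  rewrite (hE_extg _ (g' := fun k => (1 - 2 * c) + 2 * k%:R)); last first.
    by move=> k; rewrite natrS'; ring.
  rewrite hE_lin hE_M1; congr (_ + 2 * _); apply: eq_bigr => i _.
  by rewrite /zz; case: (i < j)%N => //; case: (i == j).
under eq_bigr do rewrite E subr0.
have T := triangle a.
set S := \sum_i a i in T *.
have -> : (S - c)^+2 = S^+2 - 2 * c * S + c^+2 by ring.
rewrite T /S.
have -> : \sum_i a i * (1 - 2 * c + 2 * Tn a i) = \sum_i a i * (1 - a i) +
   \sum_(j < n) a j * (2 * Tn a j + a j) - 2 * c * \sum_i a i.
  rewrite mulr_sumr -big_split -sumrB /=; apply: eq_bigr => j _; ring.
ring.
Qed.

Lemma pmf_hE (R : realType) n (a : 'I_n -> R) (f : nat -> R) :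
  \sum_(k < n.+1) pb_pmf a k * f k = hE f a.
Proof.
rewrite /pb_pmf /hE.
under eq_bigr do rewrite mulr_suml.
under eq_bigr do rewrite big_mkcond /=.
rewrite exchange_big /=; apply: eq_bigr => x _.
have HY : (Ys x < n.+1)%N.
  rewrite ltnS /Ys -[X in (_ <= X)%N]card_ord -sum1_card.
  by apply: leq_sum => i _; exact: leq_b1.
rewrite (bigD1 (Ordinal HY)) //= eqxx big1 ?addr0 // => k nk.
rewrite ifF //; apply: contraNF nk => /eqP e; apply/eqP/val_inj => /=.
by rewrite -e.
Qed.

Lemma TV_ge (R : realType) n (p q : 'I_n -> R) (f : nat -> R) (B : R) :
  (forall k, `|f k| <= B) ->
  \sum_(k < n.+1) (pb_pmf p k - pb_pmf q k) * f k <= B * (2 * TV_pb p q).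
Proof.
move=> H.
have -> : 2 * TV_pb p q = \sum_(k < n.+1) `|pb_pmf p k - pb_pmf q k|.
  by rewrite /TV_pb mulrA mulfV ?mul1r // pnatr_eq0.
rewrite mulr_sumr; apply: ler_sum => k _.
apply: (le_trans (ler_norm _)); rewrite normrM mulrC.
by apply: ler_wpM2r => //.
Qed.

Definition clampL (R : realType) (L x : R) := Num.max (- L) (Num.min L x).

Lemma clampE (R : realType) (L x : R) : 0 <= L ->
  clampL L x = if x < - L then - L else if L < x then L else x.
Proof.
move=> L0; rewrite /clampL; case: (leP L x) => h1.
  case: (leP (-L) L) => h2; case: (ltP x (-L)) => h3; case: (ltP L x) => h4; lra.
case: (leP (-L) x) => h2; case: (ltP x (-L)) => h3; case: (ltP L x) => h4; lra.
Qed.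

Lemma clamp_norm (R : realType) (L x : R) : 0 <= L -> `|clampL L x| <= L.
Proof.
move=> L0; rewrite clampE // ler_norml.
case: (ltP x (-L)) => h3; case: (ltP L x) => h4; apply/andP; split; lra.
Qed.

Lemma clamp_mono (R : realType) (L x y : R) : 0 <= L -> x <= y -> clampL L x <= clampL L y.
Proof.
move=> L0 xy; rewrite !clampE //.
case: (ltP x (-L)) => h1; case: (ltP L x) => h2;
  case: (ltP y (-L)) => h3; case: (ltP L y) => h4; lra.
Qed.

Lemma clamp_id (R : realType) (L x : R) : - L <= x -> x <= L -> clampL L x = x.
Proof.
move=> h1 h2; rewrite clampE; last lra.
case: (ltP x (-L)) => h3; case: (ltP L x) => h4; lra.
Qed.

Lemma gain (R : realType) (y c R0 Q : R) : 0 < R0 -> 0 <= Q -> R0^+2 * Q = 1 ->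
  1 + (- Q) * (y - c)^+2 <=
  clampL (R0 + 2^-1) (y + 1 - (c + 2^-1)) - clampL (R0 + 2^-1) (y - (c + 2^-1)).
Proof.
move=> R0p Q0 RQ.
have t0 : 0 <= Q * (y - c)^+2 by rewrite mulr_ge0 // sqr_ge0.
case: (leP 1 (Q * (y - c)^+2)) => h.
  have : clampL (R0 + 2^-1) (y - (c + 2^-1)) <= clampL (R0 + 2^-1) (y + 1 - (c + 2^-1)).
    by apply: clamp_mono; lra.
  rewrite mulNr; lra.
have hd : (y - c)^+2 < R0^+2.
  have -> : (y - c)^+2 = R0^+2 * (Q * (y - c)^+2) by rewrite mulrA RQ mul1r.
  set t := Q * _ in h t0 *; have : 0 < R0^+2 by rewrite exprn_gt0.
  nra.
have h1 : - R0 < y - c by nra.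
have h2 : y - c < R0 by nra.
rewrite !clamp_id; try lra.
Qed.

Lemma bw_ge0 (R : realType) n (a : 'I_n -> R) x :
  (forall i, 0 <= a i <= 1) -> 0 <= bern_weight a x.
Proof.
move=> H; apply: prodr_ge0 => i _; have /andP[h1 h2] := H i.
by case: (x i) => //; rewrite subr_ge0.
Qed.

Lemma hE_mono (R : realType) n (a : 'I_n -> R) (g1 g2 : nat -> R) :
  (forall i, 0 <= a i <= 1) -> (forall k, g1 k <= g2 k) -> hE g1 a <= hE g2 a.
Proof.
move=> Ha Hg; apply: ler_sum => x _; apply: ler_wpM2l; [exact: bw_ge0 | exact: Hg].
Qed.

Theorem theorem2 (R : realType) (n : nat) (p q : 'I_n -> R)
  (hn : (1 <= n)%N)
  (hp : forall i, 0 <= p i <= 1) (hq : forall i, 0 <= q i <= 1)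
  (hpq : forall i, q i <= p i) :
  12^-1 * Phi p q <= TV_pb p q.
Proof.
set mp := \sum_i p i; set mq := \sum_i q i.
have HD : Delta p q = mp - mq.
  rewrite /Delta /mp /mq -sumrB; apply: eq_bigr => i _.
  by rewrite ger0_norm // subr_ge0.
have sig0 : 0 <= sigma2 p.
  apply: sumr_ge0 => i _; have /andP[h1 h2] := hp i.
  by apply: mulr_ge0 => //; rewrite subr_ge0.
rewrite /Phi.
set s := Num.sqrt (sigma2 p + 1).
set Dl := Delta p q.
have HD2 : Dl = mp - mq := HD.
clear HD; rename HD2 into HD.
have s2 : s^+2 = sigma2 p + 1 by rewrite sqr_sqrtr //; lra.
have s0 : 0 <= s := sqrtr_ge0 _.
have s1 : 1 <= s by nra.
have D0 : 0 <= Dl by rewrite /Dl /Delta; apply: sumr_ge0 => i _.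
set M := Num.max Dl s.
have hDM : Dl <= M by rewrite /M le_max lexx.
have hsM : s <= M by rewrite /M le_max lexx orbT.
have M1 : 1 <= M by lra.
set Phi0 := Num.min 1 (Dl / s).
have PhiM : Phi0 * M <= Dl.
  rewrite /M /Phi0; case: (leP Dl s) => h.
    have hm : Num.min 1 (Dl / s) <= Dl / s by rewrite ge_min lexx orbT.
    apply: (le_trans (ler_wpM2r s0 hm)); rewrite divfK //; apply/eqP => e; lra.
  apply: ler_piMl => //; by rewrite ge_min lexx.
set c := (mp + mq - 1) / 2.
set R0 := 3 * M.
set Q := (R0 ^+ 2)^-1.
set L := R0 + 2^-1.
have R0p : 0 < R0 by rewrite /R0; lra.
have Q0 : 0 <= Q by rewrite /Q invr_ge0 exprn_ge0 // ltW.
have RQ : R0^+2 * Q = 1 by rewrite /Q mulfV // expf_neq0 // gt_eqF.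
pose F (k : nat) := clampL L (k%:R - (c + 2^-1)).
have key : 7 / 9 * Dl <= \sum_(k < n.+1) (pb_pmf p k - pb_pmf q k) * F k.
  under eq_bigr do rewrite mulrBl.
  rewrite sumrB !pmf_hE TEL HD /mp /mq -sumrB mulr_sumr.
  apply: ler_sum => j _; rewrite mulrC; apply: ler_wpM2l; first by rewrite subr_ge0.
  set z := zz p q j.
  have hz : forall i, 0 <= z i <= 1.
    move=> i; rewrite /z /zz; case: ifP => _; first exact: hp.
    by case: ifP => _; [rewrite lexx ler01 | exact: hq].
  have step1 : hE (fun k => 1 + (- Q) * (k%:R - c)^+2) z <= hE (fun k => F k.+1 - F k) z.
    apply: hE_mono => // k; rewrite /F natrS'; exact: gain.
  apply: le_trans step1; rewrite hE_lin hE_M2.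
  have hzV : \sum_i z i * (1 - z i) <= sigma2 p + Dl.
    have -> : sigma2 p + Dl = \sum_i (p i * (1 - p i) + (p i - q i)).
      by rewrite big_split /= sumrB HD.
    apply: ler_sum => i _.
    have /andP[a1 a2] := hp i; have /andP[b1 b2] := hq i; have e := hpq i.
    rewrite /z /zz; case: ifP => _; first nra.
    case: ifP => _; nra.
  have hzS1 : \sum_i z i <= mp.
    apply: ler_sum => i _; have /andP[a1 a2] := hp i; have e := hpq i.
    rewrite /z /zz; case: ifP => _ //; case: ifP => _ //.
  have hzS2 : mq - 1 <= \sum_i z i.
    have : \sum_i (q i - z i) <= 1.
      have zj : z j = 0 by rewrite /z /zz ltnn eqxx.
      rewrite (bigD1 j) //= zj subr0.
      have : \sum_(i < n | i != j) (q i - z i) <= 0.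
        apply: sumr_le0 => i nij; rewrite /z /zz (negbTE nij).
        case: ifP => _; rewrite ?subrr // subr_le0; exact: hpq.
      have /andP[b1 b2] := hq j; lra.
    rewrite sumrB -/mq; lra.
  have hc : (\sum_i z i - c)^+2 <= ((Dl + 1) / 2)^+2.
    have e1 : - ((Dl + 1) / 2) <= \sum_i z i - c by rewrite /c HD; lra.
    have e2 : \sum_i z i - c <= (Dl + 1) / 2 by rewrite /c HD; lra.
    nra.
  have hV : \sum_i z i * (1 - z i) + (\sum_i z i - c) ^+ 2 <= 2 * M^+2.
    have q1 : s^+2 <= M^+2 by rewrite ler_sqr ?nnegrE //; lra.
    have q2 : Dl^+2 <= M^+2 by rewrite ler_sqr ?nnegrE //; lra.
    have q3 : 0 <= (M - 1)^+2 := sqr_ge0 _.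
    nra.
  have : Q * (9 * M^+2) = R0^+2 * Q by rewrite /R0; ring.
  rewrite RQ => h9.
  nra.
have TV0 : 0 <= TV_pb p q.
  rewrite /TV_pb; apply: mulr_ge0; first by rewrite invr_ge0; lra.
  by apply: sumr_ge0 => k _.
have key2 := le_trans key (TV_ge (B := L) (f := F) p q (fun k => clamp_norm _ (ltW _))).
case: (leP Phi0 0) => hP; first lra.
have h1 : 0 <= M * (9 * TV_pb p q - Phi0).
  move: key2; rewrite /L /R0 => key2; nra.
have h2 : 0 <= 9 * TV_pb p q - Phi0 by move: h1; rewrite pmulr_rge0 //; lra.
lra.
Qed.
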